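(* Let $G\in\mathfrak{M}$, $\phi=\phi_G$, and let $\phi^c(x)=\inf_{y\in\mathbb{R}^2}(c(x,y)-\phi(y))$, $x\in\mathbb{R}^2$. Then $\phi$ and $\phi^c$ take values in $[-\infty,0]$, $\phi^c\le\phi$, and $$G=\{y\in\mathbb{R}^2:\phi(y)=0\}=\{x\in\mathbb{R}^2:\phi^c(x)=0\}.$$
   Context: $c(x,y)=(x_1-y_1)(x_2-y_2)$ for $x,y\in\mathbb{R}^2$. $\mathfrak{M}$: family of maximal monotone sets $G\subset\mathbb{R}^2$ (monotone: $c(r,s)\ge0$ for all $r,s\in G$; maximal: not a proper subset of a monotone set). $\phi_G(y)=\inf_{x\in G}c(x,y)$. *)

(* Defs.v *)
From HB Require Import structures.
From mathcomp Require Import all_boot all_order all_algebra.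
From mathcomp Require Import all_classical all_reals ereal.
Set Implicit Arguments. Unset Strict Implicit. Unset Printing Implicit Defensive.
Import Order.TTheory GRing.Theory Num.Theory.
Local Open Scope classical_set_scope.
Local Open Scope ring_scope.

Definition cost (R : realType) (x y : R * R) : R := (x.1 - y.1) * (x.2 - y.2).

Definition monotone_set (R : realType) (G : set (R * R)) : Prop :=
  forall r s, G r -> G s -> 0 <= cost r s.

Definition maximal_monotone (R : realType) (G : set (R * R)) : Prop :=
  monotone_set G /\ (forall H : set (R * R), monotone_set H -> G `<=` H -> H = G).

Definition phiG (R : realType) (G : set (R * R)) (y : R * R) : \bar R :=
  ereal_inf [set (cost x y)%:E | x in G].

Definition phiG_c (R : realType) (G : set (R * R)) (x : R * R) : \bar R :=
  ereal_inf [set ((cost x y)%:E - phiG G y)%E | y in [set: R * R]].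

(* Main.v *)
Require Import Defs.
From mathcomp Require Import all_boot all_order all_algebra.
From mathcomp Require Import all_classical all_reals ereal.
From mathcomp Require Import lra.
Import Order.TTheory GRing.Theory Num.Theory.
Local Open Scope classical_set_scope.
Local Open Scope ring_scope.

Lemma costC (R : realType) (x y : R * R) : cost x y = cost y x.
Proof. rewrite /cost; lra. Qed.

Lemma costxx (R : realType) (x : R * R) : cost x x = 0.
Proof. by rewrite /cost subrr mul0r. Qed.

Lemma nonmem (R : realType) (G : set (R * R)) y :
  maximal_monotone G -> ~ G y -> exists x, G x /\ cost x y < 0.
Proof.
move=> [mG maxG] nGy.
apply: contrapT => hne.
have key : forall x, G x -> 0 <= cost x y.
  move=> x Gx; rewrite leNgt; apply/negP => lt.
  by apply: hne; exists x.
have mH : monotone_set (G `|` [set y]).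
  move=> r s [Gr|->] [Gs|->].
  - exact: mG.
  - exact: key.
  - by rewrite costC; apply: key.
  - by rewrite costxx.
have := maxG _ mH (@subsetUl _ G [set y]).
move=> eq; apply: nGy; rewrite -eq; by right.
Qed.

Lemma phi_le0 (R : realType) (G : set (R * R)) y :
  maximal_monotone G -> (phiG G y <= 0)%E.
Proof.
move=> mm.
have [Gy|nGy] := pselect (G y).
  apply: ge_ereal_inf; exists (cost y y)%:E; first by exists y.
  by rewrite costxx.
have [x [Gx lt]] := @nonmem _ _ y mm nGy.
apply: ge_ereal_inf; exists (cost x y)%:E; first by exists x.
by rewrite lee_fin ltW.
Qed.

Lemma phi_lt0 (R : realType) (G : set (R * R)) y :
  maximal_monotone G -> ~ G y -> (phiG G y < 0)%E.
Proof.
move=> mm nGy.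
have [x [Gx lt]] := @nonmem _ _ y mm nGy.
apply: (@le_lt_trans _ _ (cost x y)%:E); last by rewrite lte_fin.
by apply: ereal_inf_lbound; exists x.
Qed.

Lemma phi_mem (R : realType) (G : set (R * R)) y :
  maximal_monotone G -> G y -> phiG G y = 0%E.
Proof.
move=> mm Gy; apply/eqP; rewrite eq_le (@phi_le0 _ _ y mm) //=.
apply/ereal_infP => _ [x Gx <-]; rewrite lee_fin; exact: (proj1 mm x y Gx Gy).
Qed.

Lemma phic_le (R : realType) (G : set (R * R)) x :
  maximal_monotone G -> (phiG_c G x <= phiG G x)%E.
Proof.
move=> mm; apply/ereal_infP => _ [y Gy <-].
apply: ge_ereal_inf; exists ((cost x y)%:E - phiG G y)%E; first by exists y.
by rewrite (@phi_mem _ _ y mm Gy) sube0 costC.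
Qed.

Lemma phic_mem (R : realType) (G : set (R * R)) x :
  maximal_monotone G -> G x -> phiG_c G x = 0%E.
Proof.
move=> mm Gx; apply/eqP; rewrite eq_le.
rewrite (le_trans (@phic_le _ _ x mm)) ?(@phi_le0 _ _ x mm) //=.
apply/ereal_infP => _ [y _ <-].
rewrite sube_ge0; last by rewrite orbT.
apply: ereal_inf_lbound; by exists x.
Qed.

Theorem lemma16 (R : realType) (G : set (R * R)) :
  maximal_monotone G ->
  (forall y, (phiG G y <= 0)%E) /\ (forall x, (phiG_c G x <= 0)%E) /\
  (forall x, (phiG_c G x <= phiG G x)%E) /\
  G = [set y | phiG G y = 0%E] /\ G = [set x | phiG_c G x = 0%E].
Proof.
move=> mm.
have h1 : forall y, (phiG G y <= 0)%E by move=> y; exact: phi_le0.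
have h3 : forall x, (phiG_c G x <= phiG G x)%E by move=> x; exact: phic_le.
split=> //; split; first by move=> x; exact: le_trans (h3 x) (h1 x).
split=> //; split; apply/seteqP; split=> z /=.
- exact: phi_mem.
- move=> e; apply: contrapT => nG.
  by have := @phi_lt0 _ _ z mm nG; rewrite e ltxx.
- exact: phic_mem.
- move=> e; apply: contrapT => nG.
  have := le_lt_trans (h3 z) (@phi_lt0 _ _ z mm nG).
  by rewrite e ltxx.
Qed.
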